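(* Let $(a_n)_{n=1}^N\in\mathcal A_1$ and let $\{\mathcal P_n\}_{n=1}^N$ be a sequence of pyramids. For any partition $\{N_k\}_{k=1}^M$, $M\in\overline{\mathbb N}$, of $[N]$ into nonempty pairwise disjoint subsets, setting $\alpha_k:=\sum_{n\in N_k}a_n>0$, we have $$\sum_{n=1}^N\mathcal P_n^{a_n}=\sum_{k=1}^M\Big(\sum_{n\in N_k}\mathcal P_n^{a_n/\alpha_k}\Big)^{\alpha_k}.$$
   Context: An mm-space is a triple $(X,d_X,\mu_X)$ with $(X,d_X)$ complete separable metric and $\mu_X$ a Borel probability measure; $\mathcal X$ is the set of mm-isomorphism classes. $Y\prec X$ means there is a 1-Lipschitz $f:X\to Y$ with $f_*\mu_X=\mu_Y$. The box distance $\square(X,Y)$ is the infimum of $\max\{\operatorname{dis}(S),1-\pi(S)\}$ over couplings $\pi$ of $\mu_X,\mu_Y$ and Borel $S\subset X\times Y$, $\operatorname{dis}(S)=\sup\{|d_X(x,x')-d_Y(y,y')|:(x,y),(x',y')\in S\}$. A pyramid is a nonempty box-closed subset of $\mathcal X$ closed downward under $\prec$ and directed. $\overline{\mathbb N}=\mathbb N\cup\{\infty\}$, $[N]=\{1,\dots,N\}$ or $\mathbb N$. $\mathcal A_1$: sequences $(a_n)_{n=1}^N$ with $a_n\in(0,1]$, $\sum a_n=1$. For a countable index set $I$, weights $(c_i)_{i\in I}$ in $(0,1]$ with $\sum_ic_i=1$ and pyramids $\mathcal P_i$, the direct sum $\sum_{i\in I}\mathcal P_i^{c_i}$ is the set of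 $X\in\mathcal X$ for which there exist $X_i\in\mathcal P_i$ and 1-Lipschitz $f_i:X_i\to X$ with $\mu_X=\sum_ic_i(f_i)_*\mu_{X_i}$; it is a pyramid. *)

(* Defs.v *)
From HB Require Import structures.
From mathcomp Require Import all_boot all_order all_algebra.
From mathcomp Require Import all_classical all_reals all_analysis.
From mathcomp Require Import Rstruct Rstruct_topology.
Set Implicit Arguments. Unset Strict Implicit. Unset Printing Implicit Defensive.
Import Order.TTheory GRing.Theory Num.Theory.
Local Open Scope classical_set_scope.
Local Open Scope ring_scope.

Notation RR := Rdefinitions.R.

Definition is_metric (T : Type) (d : T -> T -> RR) : Prop :=
  [/\ forall x y, 0 <= d x y,
      forall x y, d x y = 0 <-> x = y,
      forall x y, d x y = d y x &
      forall x y z, d x z <= d x y + d y z].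

Definition d_cauchy (T : Type) (d : T -> T -> RR) (u : nat -> T) : Prop :=
  forall e : RR, 0 < e -> exists N : nat, forall m n, (N <= m)%N -> (N <= n)%N ->
    d (u m) (u n) < e.

Definition d_converges (T : Type) (d : T -> T -> RR) (u : nat -> T) (x : T) : Prop :=
  forall e : RR, 0 < e -> exists N : nat, forall n, (N <= n)%N -> d (u n) x < e.

Definition d_complete (T : Type) (d : T -> T -> RR) : Prop :=
  forall u : nat -> T, d_cauchy d u -> exists x, d_converges d u x.

Definition d_separable (T : Type) (d : T -> T -> RR) : Prop :=
  exists D : set T, countable D /\
    forall x e, 0 < e -> exists2 y, D y & d x y < e.

Definition d_open (T : Type) (d : T -> T -> RR) (A : set T) : Prop :=
  forall x, A x -> exists2 r : RR, 0 < r & [set y | d x y < r] `<=` A.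

Definition d_borel (T : Type) (d : T -> T -> RR) : set (set T) :=
  smallest (sigma_algebra setT) (d_open d).

(** Probability measure on a sigma-algebra [B] (values outside [B] are irrelevant). *)
Definition is_prob (T : Type) (B : set (set T)) (mu : set T -> \bar RR) : Prop :=
  [/\ mu set0 = 0%E,
      forall A, B A -> (0 <= mu A)%E,
      mu setT = 1%E &
      forall F : nat -> set T, (forall n, B (F n)) -> trivIset setT F ->
        ((fun n => \sum_(0 <= i < n) mu (F i)) @ \oo --> mu (\bigcup_n F n))%E].

Record mmspace := MMSpace {
  mm_car : Type;
  mm_d : mm_car -> mm_car -> RR;
  mm_metric : is_metric mm_d;
  mm_complete : d_complete mm_d;
  mm_separable : d_separable mm_d;
  mm_mu : set mm_car -> \bar RR;
  mm_prob : is_prob (d_borel mm_d) mm_mu }.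

Arguments mm_mu : clear implicits.

Definition mm_borel (X : mmspace) : set (set (mm_car X)) := d_borel (@mm_d X).
Arguments mm_borel : clear implicits.

Definition lip1 (X Y : mmspace) (f : mm_car X -> mm_car Y) : Prop :=
  forall x x', mm_d (f x) (f x') <= mm_d x x'.

Definition pushes (X Y : mmspace) (f : mm_car X -> mm_car Y) : Prop :=
  forall A, mm_borel Y A -> mm_mu Y A = mm_mu X (f @^-1` A).

Definition mm_prec (Y X : mmspace) : Prop :=
  exists f : mm_car X -> mm_car Y, lip1 f /\ pushes f.

(** Borel sets of X × Y (product sigma-algebra of the Borel sets, which is the
    Borel sigma-algebra of the product since X, Y are separable). *)
Definition prod_borel (X Y : mmspace) : set (set (mm_car X * mm_car Y)) :=
  smallest (sigma_algebra setT)
    [set A `*` B | A in mm_borel X & B in mm_borel Y].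

Definition is_coupling (X Y : mmspace) (pi : set (mm_car X * mm_car Y) -> \bar RR) : Prop :=
  [/\ is_prob (@prod_borel X Y) pi,
      forall A, mm_borel X A -> pi (A `*` setT) = mm_mu X A &
      forall B, mm_borel Y B -> pi (setT `*` B) = mm_mu Y B].

Definition dis (X Y : mmspace) (S : set (mm_car X * mm_car Y)) : \bar RR :=
  ereal_sup [set (`|mm_d pq.1.1 pq.2.1 - mm_d pq.1.2 pq.2.2|)%:E
            | pq in [set pq | S pq.1 /\ S pq.2]].

Definition box (X Y : mmspace) : \bar RR :=
  ereal_inf [set maxe (dis S) (1 - pi S)%E
            | pi in [set pi | is_coupling pi]
            & S in [set S | @prod_borel X Y S]].

Definition box_closed (P : set mmspace) : Prop :=
  forall X, (forall e : RR, 0 < e -> exists2 Y, P Y & (box X Y < e%:E)%E) -> P X.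

Definition pyramid (P : set mmspace) : Prop :=
  [/\ exists X, P X,
      box_closed P,
      forall X Y, P X -> mm_prec Y X -> P Y &
      forall X Y, P X -> P Y -> exists2 Z, P Z & mm_prec X Z /\ mm_prec Y Z].

Definition dsum (J : set nat) (c : nat -> RR) (P : nat -> set mmspace) : set mmspace :=
  [set X | exists Xs : nat -> mmspace,
     (forall i, J i -> P i (Xs i)) /\
     exists fs : forall i, mm_car (Xs i) -> mm_car X,
       (forall i, J i -> lip1 (fs i)) /\
       forall A, mm_borel X A ->
         mm_mu X A = \esum_(i in J) ((c i)%:E * mm_mu (Xs i) (fs i @^-1` A))%E].

(** [[N]] for [N ∈ ℕ ∪ {∞}] ([None] = ∞). *)
Definition idx (N : option nat) : set nat :=
  match N with
  | Some N => [set n | (1 <= n <= N)%N]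
  | None => [set n | (1 <= n)%N]
  end.

Definition in_A1 (N : option nat) (a : nat -> RR) : Prop :=
  (forall n, idx N n -> 0 < a n <= 1) /\
  (\esum_(n in idx N) (a n)%:E = 1%E).

Definition is_partition (N M : option nat) (Nk : nat -> set nat) : Prop :=
  [/\ forall k, idx M k -> Nk k !=set0,
      forall k, idx M k -> Nk k `<=` idx N,
      forall k l, idx M k -> idx M l -> k <> l -> Nk k `&` Nk l = set0 &
      \bigcup_(k in idx M) Nk k = idx N].

(* Main.v *)
Require Import Defs.
From HB Require Import structures.
From mathcomp Require Import all_boot all_order all_algebra.
From mathcomp Require Import all_classical all_reals all_analysis.
From mathcomp Require Import Rstruct Rstruct_topology.
Import Order.TTheory GRing.Theory Num.Theory.
Local Open Scope classical_set_scope.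
Local Open Scope ring_scope.

Lemma esumZ_le (I : set nat) (c : RR) (b : nat -> \bar RR) : 0 < c ->
  (forall i, (0 <= b i)%E) ->
  (\esum_(i in I) (c%:E * b i) <= c%:E * \esum_(i in I) b i)%E.
Proof.
move=> c0 b0; apply: ge_ereal_sup => _ [X [finX XI] <-].
rewrite -ge0_mule_fsumr //; apply: lee_wpmul2l; first by rewrite lee_fin ltW.
by apply: ereal_sup_ubound; exists X.
Qed.

Lemma esumZ0 (I : set nat) (c : RR) (b : nat -> \bar RR) : 0 < c ->
  (forall i, (0 <= b i)%E) ->
  (\esum_(i in I) (c%:E * b i) = c%:E * \esum_(i in I) b i)%E.
Proof.
move=> c0 b0; apply/eqP; rewrite eq_le esumZ_le //=.
have ci0 : 0 < c^-1 by rewrite invr_gt0.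
have := @esumZ_le I c^-1 (fun i => (c%:E * b i)%E) ci0.
have H : forall i, (0 <= c%:E * b i)%E by move=> i; rewrite mule_ge0 // lee_fin ltW.
move=> /(_ H).
have -> : (\esum_(i in I) (c^-1%:E * (c%:E * b i)) = \esum_(i in I) b i)%E.
  by apply: eq_esum => i _; rewrite muleA -EFinM mulVf ?gt_eqF // mul1e.
move=> le1.
rewrite -[X in (_ <= X)%E](mul1e).
rewrite -(@mulfV _ c); last by rewrite gt_eqF.
rewrite EFinM -muleA.
by apply: lee_wpmul2l => //; rewrite lee_fin ltW.
Qed.

Lemma esumZ (I : set nat) (c : RR) (b : nat -> \bar RR) : 0 < c ->
  (forall i, I i -> (0 <= b i)%E) ->
  (\esum_(i in I) (c%:E * b i) = c%:E * \esum_(i in I) b i)%E.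
Proof.
move=> c0 b0.
rewrite esum_mkcond [in RHS]esum_mkcond.
rewrite -esumZ0 //; last by move=> i; case: ifPn => // /set_mem /b0.
by apply: eq_esum => i _; case: ifPn => //; rewrite mule0.
Qed.

Lemma borel_pre (X Y : mmspace) (f : mm_car X -> mm_car Y) : lip1 f ->
  forall A, mm_borel Y A -> mm_borel X (f @^-1` A).
Proof.
move=> lf A BA.
pose G := [set B | mm_borel X (f @^-1` B)].
have sG : sigma_algebra setT G.
  have [s0 sC sU] := @smallest_sigma_algebra _ setT (d_open (@mm_d X)).
  split.
  - by rewrite /G /= preimage_set0.
  - move=> B GB; rewrite /G /= setTD preimage_setC.
    by rewrite -setTD; apply: sC.
  - move=> F GF; rewrite /G /= preimage_bigcup; apply: sU => n; exact: GF.
have oG : d_open (@mm_d Y) `<=` G.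
  move=> B oB; rewrite /G /=; apply: sub_sigma_algebra => x /= Bfx.
  have [r r0 sub] := oB _ Bfx; exists r => // y /= dxy; apply: sub => /=.
  exact: le_lt_trans (lf x y) dxy.
by apply: (BA G); split.
Qed.
Set Implicit Arguments. Unset Strict Implicit. Unset Printing Implicit Defensive.
Definition good (X : mmspace) (J : set nat) (c : nat -> RR) (Xs : nat -> mmspace)
  (fs : forall i, mm_car (Xs i) -> mm_car X) : Prop :=
  [/\ forall i, J i -> lip1 (fs i), forall i, J i -> 0 <= c i &
      (\esum_(i in J) (c i)%:E = 1)%E].

Definition mixmu (X : mmspace) (J : set nat) (c : nat -> RR) (Xs : nat -> mmspace)
  (fs : forall i, mm_car (Xs i) -> mm_car X) : set (mm_car X) -> \bar RR :=
  fun A => if `[< good J c fs >] then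
    (\esum_(i in J) ((c i)%:E * mm_mu (Xs i) (fs i @^-1` A)))%E
  else mm_mu X A.

Lemma mu_ge0 (X : mmspace) A : mm_borel X A -> (0 <= mm_mu X A)%E.
Proof. by case: (mm_prob X) => _ H _ _; apply: H. Qed.

Lemma trivIset_pre (T U : Type) (f : T -> U) (F : nat -> set U) :
  trivIset setT F -> trivIset setT (fun i => f @^-1` F i).
Proof.
move=> tF i j _ _ [x [Fi Fj]]; apply: tF => //; by exists (f x).
Qed.

Lemma mix_prob (X : mmspace) (J : set nat) (c : nat -> RR) (Xs : nat -> mmspace)
  (fs : forall i, mm_car (Xs i) -> mm_car X) :
  is_prob (d_borel (@mm_d X)) (mixmu J c fs).
Proof.
rewrite /mixmu; case: asboolP => [[lJ c0 c1]|_]; last exact: mm_prob.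
have g0 : forall A, mm_borel X A -> forall i, J i ->
    (0 <= (c i)%:E * mm_mu (Xs i) (fs i @^-1` A))%E.
  move=> A BA i Ji; rewrite mule_ge0 // ?lee_fin ?c0 //.
  by apply: mu_ge0; apply: borel_pre => //; apply: lJ.
split.
- apply: esum1 => i Ji; rewrite preimage_set0.
  by case: (mm_prob (Xs i)) => -> _ _ _; rewrite mule0.
- by move=> A BA; apply: esum_ge0; apply: g0.
- rewrite -c1; apply: eq_esum => i Ji; rewrite preimage_setT.
  by case: (mm_prob (Xs i)) => _ _ -> _; rewrite mule1.
move=> F BF tF.
set m := fun A => (\esum_(i in J) ((c i)%:E * mm_mu (Xs i) (fs i @^-1` A)))%E.
have m0 : forall n, (0 <= m (F n))%E by move=> n; apply: esum_ge0 => i Ji; apply: g0 => //; apply: BF.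
apply: cvg_toP; first by apply: is_cvg_nneseries => n _ _; exact: m0.
pose g' j i := if j \in J then ((c j)%:E * mm_mu (Xs j) (fs j @^-1` F i))%E else 0%E.
have g'0 : forall j i, (0 <= g' j i)%E.
  by move=> j i; rewrite /g'; case: ifPn => // /set_mem Jj; apply: g0 => //; apply: BF.
have E1 : forall i, m (F i) = (\sum_(j <oo) g' j i)%E.
  by move=> i; rewrite /m esum_mkcond nneseries_esumT.
have E2 : forall j, J j -> mm_mu (Xs j) (fs j @^-1` \bigcup_n F n) =
     (\sum_(i <oo) mm_mu (Xs j) (fs j @^-1` F i))%E.
  move=> j Jj; apply/esym/cvg_lim => //.
  case: (mm_prob (Xs j)) => _ _ _ /(_ (fun i => fs j @^-1` F i)).
  rewrite preimage_bigcup; apply.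
    by move=> i; apply: borel_pre (lJ _ Jj) _ (BF i).
  exact: trivIset_pre.
transitivity (\sum_(i <oo) \sum_(j <oo) g' j i)%E.
  by congr (limn _); apply/funext => n; apply: eq_bigr => i _; rewrite -E1.
rewrite nneseries_interchange //.
rewrite /m esum_mkcond -nneseries_esumT; last first.
  move=> j; case: ifPn => // /set_mem Jj; apply: g0 => //.
  have [_ _ sU] := @smallest_sigma_algebra _ setT (d_open (@mm_d X)); exact: sU.
congr (limn _); apply/funext => n; apply: eq_bigr => j _.
rewrite /g'; case: ifPn => [/set_mem Jj|_]; last by rewrite eseries0.
by rewrite E2 // nneseriesZl // => i _; apply: mu_ge0; apply: borel_pre (lJ _ Jj) _ (BF i).
Qed.
Lemma alpha_facts N M Nk a : in_A1 N a -> is_partition N M Nk -> forall k, idx M k ->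
  (\esum_(n in Nk k) (a n)%:E)%E = (fine (\esum_(n in Nk k) (a n)%:E))%:E /\
  0 < fine (\esum_(n in Nk k) (a n)%:E)%E.
Proof.
move=> [a01 a1] [ne sub _ _] k Mk.
set s := (\esum_(n in Nk k) (a n)%:E)%E.
have [n0 Nn0] := ne k Mk.
have lo : ((a n0)%:E <= s)%E.
  apply: esum_ge; exists [set n0]; first by split; [exact: finite_set1 | move=> x ->].
  by rewrite fsbig_set1.
have hi : (s <= 1)%E.
  rewrite -a1 /s esum_mkcond [X in (_ <= X)%E]esum_mkcond; apply: le_esum => n _.
  case: ifPn => [/set_mem H|_]; last by case: ifPn => // /set_mem /a01 /andP[+ _]; rewrite lee_fin; apply: ltW.
  by rewrite ifT //; apply/mem_set; apply: sub H.
have a0 : 0 < a n0 by case/andP: (a01 n0 (sub k Mk n0 Nn0)).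
have s0 : (0 < s)%E by apply: lt_le_trans lo; rewrite lte_fin.
have sf : s \is a fin_num by rewrite ge0_fin_numE ?ltW //; apply: le_lt_trans hi _; rewrite ltey.
split; first by rewrite fineK.
by apply: fine_gt0; rewrite s0 /=; apply: le_lt_trans hi _; rewrite ltey.
Qed.

Lemma part_sum N M Nk a (h : nat -> \bar RR) : in_A1 N a -> is_partition N M Nk ->
  (forall n, idx N n -> (0 <= h n)%E) ->
  let alpha := fun k => fine (\esum_(n in Nk k) (a n)%:E)%E in
  (\esum_(k in idx M) ((alpha k)%:E * \esum_(n in Nk k) ((a n / alpha k)%:E * h n))
   = \esum_(n in idx N) ((a n)%:E * h n))%E.
Proof.
move=> hA hP h0 alpha.
have hA' := hA; case: hA' => a01 _.
have hP' := hP; case: hP' => ne sub dis cup.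
transitivity (\esum_(k in idx M) \esum_(n in Nk k) ((a n)%:E * h n))%E.
  apply: eq_esum => k Mk.
  have [_ al0] := alpha_facts hA hP Mk.
  rewrite -esumZ //; last first.
    move=> n Nn; have Nn' := sub k Mk n Nn.
    rewrite mule_ge0 ?h0 // lee_fin divr_ge0 // ?ltW //.
    by case/andP: (a01 n Nn').
  apply: eq_esum => n _; rewrite muleA -EFinM mulrCA mulfV ?mulr1 //.
  by rewrite gt_eqF.
pose J' k := if `[< idx M k >] then Nk k else set0.
have -> : (\esum_(k in idx M) \esum_(n in Nk k) ((a n)%:E * h n) =
          \esum_(k in idx M) \esum_(n in J' k) ((a n)%:E * h n))%E.
  by apply: eq_esum => k Mk; rewrite /J' asboolT.
rewrite -esum_bigcup; last first.
  - move=> n [k Mk]; rewrite /J' asboolT // => Nn.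
    have Nn' := sub k Mk n Nn.
    rewrite mule_ge0 ?h0 // lee_fin ltW //.
    by case/andP: (a01 n Nn').
  - apply: (@sub_trivIset _ _ _ setT) => // i j _ _.
    rewrite /J'; case: asboolP => Mi; last by case=> x [].
    case: asboolP => Mj; last by case=> x [_ []].
    move=> ne'; apply: contrapT => ij; move: (dis i j Mi Mj ij).
    by case: ne' => x ? /seteqP[+ _] => /(_ x); apply.
congr esum.
rewrite -cup; apply/seteqP; split => n [k Mk].
  by rewrite /J' asboolT // => ?; exists k.
by move=> ?; exists k => //; rewrite /J' asboolT.
Qed.
Unset Implicit Arguments.
Definition mixsp (X : mmspace) (J : set nat) (c : nat -> RR) (Xs : nat -> mmspace)
  (fs : forall i, mm_car (Xs i) -> mm_car X) : mmspace :=
  @MMSpace (mm_car X) (@mm_d X) (@mm_metric X) (@mm_complete X) (@mm_separable X) (mixmu J c fs) (mix_prob J c fs).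

Theorem proposition3p22 (N : option nat) (a : nat -> RR) (P : nat -> set mmspace)
    (M : option nat) (Nk : nat -> set nat) :
  in_A1 N a ->
  (forall n, idx N n -> pyramid (P n)) ->
  is_partition N M Nk ->
  let alpha := fun k => fine (\esum_(n in Nk k) (a n)%:E) in
  dsum (idx N) a P =
  dsum (idx M) alpha (fun k => dsum (Nk k) (fun n => a n / alpha k) P).
Proof.
move=> hA hPy hP alpha.
have hA' := hA; case: hA' => a01 _.
have hP' := hP; case: hP' => ne sub dis cup.
apply/seteqP; split => X.
- case=> Xs [HP [fs [Hl Hmu]]].
  pose Y k := @mixsp X (Nk k) (fun n => a n / alpha k) Xs fs.
  have gd : forall k, idx M k -> good (Nk k) (fun n => a n / alpha k) fs.
    move=> k Mk; have [E1 al0] := alpha_facts hA hP Mk.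
    split.
    + by move=> n Nn; apply: Hl; exact: sub k Mk n Nn.
    + move=> n Nn; rewrite divr_ge0 // ?ltW //.
      by case/andP: (a01 n (sub k Mk n Nn)).
    + under eq_esum do rewrite mulrC EFinM.
      rewrite esumZ ?invr_gt0 //; last by move=> n Nn; rewrite lee_fin ltW //; case/andP: (a01 n (sub k Mk n Nn)).
      rewrite [X in (_ * X)%E]E1 -EFinM mulVf //.
      by rewrite gt_eqF.
  exists Y; split.
  + move=> k Mk.
    exists Xs; split; first by move=> n Nn; apply: HP; apply: sub k Mk n Nn.
    exists fs; split; first by case: (gd k Mk).
    by move=> A BA; rewrite /= /mixmu asboolT //; apply: gd.
  + exists (fun k => (fun x => x) : mm_car X -> mm_car (Y k)). split.
    * by move=> k _ x x'; exact: lexx.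
    * move=> A BA; rewrite Hmu //.
      have H0 : forall n, idx N n -> (0 <= mm_mu (Xs n) (fs n @^-1` A))%E.
        by move=> n Nn; apply: mu_ge0; apply: borel_pre (Hl n Nn) _ BA.
      have PS := part_sum hA hP H0.
      apply: eq_trans (esym PS) _; apply: eq_esum => k Mk.
      by rewrite /= /mixmu asboolT //; apply: gd.
- case=> Ys [HY [gs [Hg Hmu]]].
  have Fex : forall k, exists p : {Xs : nat -> mmspace & forall i, mm_car (Xs i) -> mm_car (Ys k)},
     idx M k -> [/\ forall n, Nk k n -> P n (projT1 p n), forall n, Nk k n -> lip1 (projT2 p n) &
        forall A, mm_borel (Ys k) A -> mm_mu (Ys k) A =
          (\esum_(n in Nk k) ((a n / alpha k)%:E * mm_mu (projT1 p n) (projT2 p n @^-1` A)))%E].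
    move=> k; case: (pselect (idx M k)) => Mk.
      have [Xs [HP' [fs [Hl' Hm']]]] := HY k Mk.
      by exists (existT _ Xs fs).
    by exists (existT _ (fun _ => Ys k) (fun _ x => x)).
  pose F k := proj1_sig (cid (Fex k)).
  have HF : forall k, _ := fun k => proj2_sig (cid (Fex k)).
  have kex : forall n, exists k, idx N n -> idx M k /\ Nk k n.
    move=> n; case: (pselect (idx N n)) => Nn; last by exists 0%N.
    rewrite -cup in Nn; case: Nn => k Mk Nkn; by exists k.
  have [ka Hka] := choice kex.
  pose Xs' n := projT1 (F (ka n)) n.
  pose fs' n : mm_car (Xs' n) -> mm_car X := fun x => gs (ka n) (projT2 (F (ka n)) n x).
  have lf : forall n, idx N n -> lip1 (fs' n).
    move=> n Nn x x'; have [Mk Nkn] := Hka n Nn; have [_ H2 _] := HF _ Mk.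
    apply: le_trans (Hg _ Mk _ _) _; exact: H2.
  exists Xs'; split.
    move=> n Nn; have [Mk Nkn] := Hka n Nn; have [H1 _ _] := HF _ Mk; exact: H1.
  exists fs'; split; first exact: lf.
  move=> A BA; rewrite Hmu //.
  have H0 : forall n, idx N n -> (0 <= mm_mu (Xs' n) (fs' n @^-1` A))%E.
    by move=> n Nn; apply: mu_ge0; apply: borel_pre (lf n Nn) _ BA.
  have PS := part_sum hA hP H0.
  apply: eq_trans _ PS; apply: eq_esum => k Mk.
  have [_ _ H3] := HF k Mk.
  rewrite H3; last by apply: borel_pre (Hg k Mk) _ BA.
  congr (_ * _)%E; apply: eq_esum => n Nkn.
  have Nn := sub k Mk n Nkn.
  have [Mk' Nkn'] := Hka n Nn.
  have e : ka n = k.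
    apply: contrapT => ne'; have := dis _ _ Mk' Mk ne'.
    by move/seteqP => [+ _] => /(_ n (conj Nkn' Nkn)).
  by rewrite /fs' /Xs' e.
Qed.
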